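(* Let $D \in \mathbb{N}^+$, let $\omega_0^{(1)},\dots,\omega_0^{(D)}>0$ be fundamental frequencies, and let $\mathcal{I} \subset \mathbb{Z}_{\ge 0}^D$ be a nonempty finite index set (for example an index set of some refinement $R$) with cardinality $C_{\mathcal{I}}=|\mathcal{I}|$. For $\mathbf{k}\in\mathcal{I}$ let $\eta(\mathbf{k})=\#\{d\in\{1,\dots,D\}: k_d\neq 0\}$. Let $\hat{\Phi}^{\text{mask}}_{\mathcal{I}}(\mathbf{x})$ be the sparse (masked) Index Set Fourier Series feature map and $\hat{\Phi}^{\text{full}}_{\mathcal{I}}(\mathbf{x})$ the full feature map described in the context. Then $$|\mathcal{I}| \;\le\; |\hat{\Phi}^{\text{mask}}_{\mathcal{I}}(\mathbf{x})| \;=\; \sum_{\mathbf{k}\in\mathcal{I}} 2^{\eta(\mathbf{k})} \;\le\; |\hat{\Phi}^{\text{full}}_{\mathcal{I}}(\mathbf{x})| \;\le\; C_{\mathcal{I}}\,2^{D}.$$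
   Context: For $\mathbf{k}=(k_1,\dots,k_D)\in\mathcal{I}$ let $\rho_{\mathbf{k}}=\prod_{d=1}^D q^{(d)}_{k_d}$ be a product of nonnegative per-dimension univariate Fourier series coefficients of the kernel being approximated, and $a_{\mathbf{k},d}=k_d\omega_0^{(d)}$. Full feature map: letting $\Xi^{(D)}$ be the $2^{D-1}$ sign vectors $\boldsymbol{\xi}\in\{+1,-1\}^D$ with $\xi_1=+1$, $\hat{\Phi}^{\text{full}}_{\mathcal{I}}(\mathbf{x})$ is the vector obtained by concatenating, over all $\mathbf{k}\in\mathcal{I}$ and $\boldsymbol{\xi}\in\Xi^{(D)}$, the two entries $\sqrt{\rho_{\mathbf{k}}/2^{D-1}}\cos(\sum_{d=1}^D a_{\mathbf{k},d}\xi_d x_d)$ and $\sqrt{\rho_{\mathbf{k}}/2^{D-1}}\sin(\sum_{d=1}^D a_{\mathbf{k},d}\xi_d x_d)$. Sparse (masked) feature map: for each $\mathbf{k}$, the factors $\cos(k_d\omega_0^{(d)}(x_d-x_d'))$ with $k_d=0$ in the product $\prod_{d=1}^D q^{(d)}_{k_d}\cos(k_d\omega_0^{(d)}(x_d-x'_d))$ are replaced by the constant $1$ (masking), and only the remaining $\eta(\mathbf{k})$ data-dependent cosine factors are expanded by repeated use of $\cos u\cos v=\tfrac12[\cos(u-v)+\cos(u+v)]$ and $\cos(u-v)=\cos u\cos v+\sin u\sin v$. Concretely, with $S(\mathbf{k})=\{d:k_d\neq 0\}$: if $S(\mathbf{k})=\emptyset$ the block for $\mathbf{k}$ is the single constant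 entry $\sqrt{\rho_{\mathbf{k}}}$; otherwise, letting $d_0=\min S(\mathbf{k})$, the block consists, for each sign vector $\mathbf{s}\in\{+1,-1\}^{S(\mathbf{k})}$ with $s_{d_0}=+1$, of the two entries $c\cos(\sum_{d\in S(\mathbf{k})}a_{\mathbf{k},d}s_dx_d)$ and $c\sin(\sum_{d\in S(\mathbf{k})}a_{\mathbf{k},d}s_dx_d)$ with a data-independent scaling $c=\sqrt{\rho_{\mathbf{k}}/2^{\eta(\mathbf{k})-1}}$. $\hat{\Phi}^{\text{mask}}_{\mathcal{I}}(\mathbf{x})$ is the concatenation of these blocks over $\mathbf{k}\in\mathcal{I}$. The cardinality $|\cdot|$ of a feature map means the number of its entries. *)

(* Defs.v *)
From mathcomp Require Import all_boot all_order all_algebra.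
From mathcomp Require Import reals trigo.
Set Implicit Arguments. Unset Strict Implicit. Unset Printing Implicit Defensive.
Import Order.TTheory GRing.Theory Num.Theory.
Local Open Scope ring_scope.

Section ISFF.
Variables (R : realType) (D : nat).

Definition mindex := {ffun 'I_D -> nat}.

Definition rho (q : 'I_D -> nat -> R) (k : mindex) : R := \prod_(d : 'I_D) q d (k d).

Definition acoef (omega0 : 'I_D -> R) (k : mindex) (d : 'I_D) : R := (k d)%:R * omega0 d.

Definition sgnR (b : bool) : R := if b then 1 else -1.

Definition supp (k : mindex) : {set 'I_D} := [set d | k d != 0%N].
Definition eta (k : mindex) : nat := #|supp k|.

Definition Xi : seq {ffun 'I_D -> bool} :=
  [seq xi : {ffun 'I_D -> bool} <- enum {ffun 'I_D -> bool} | [forall d : 'I_D, (val d == 0%N) ==> xi d]].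

Definition Phi_full (omega0 : 'I_D -> R) (q : 'I_D -> nat -> R) (I : seq mindex)
    (x : 'I_D -> R) : seq R :=
  flatten [seq flatten [seq
      let c := Num.sqrt (rho q k / 2 ^+ D.-1) in
      let u := \sum_(d : 'I_D) acoef omega0 k d * sgnR (xi d) * x d in
      [:: c * cos u; c * sin u]
    | xi : {ffun 'I_D -> bool} <- Xi] | k <- I].

(* sign vectors s in {+1,-1}^{S(k)} with s_{d0} = +1, d0 = min S(k);
   encoded as boolean vectors on 'I_D that are constantly true (+1)
   outside S(k) (so the encoding is a bijection with {+1,-1}^{S(k)}). *)
Definition signsS (k : mindex) : seq {ffun 'I_D -> bool} :=
  [seq s : {ffun 'I_D -> bool} <- enum {ffun 'I_D -> bool} |
     [forall d : 'I_D, (d \notin supp k) ==> s d] &&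
     [forall d : 'I_D, ((d \in supp k) &&
        [forall d' : 'I_D, (d' \in supp k) ==> (val d <= val d')%N]) ==> s d]].

Definition mask_block (omega0 : 'I_D -> R) (q : 'I_D -> nat -> R) (k : mindex)
    (x : 'I_D -> R) : seq R :=
  if supp k == set0 then [:: Num.sqrt (rho q k)] else
  flatten [seq
      let c := Num.sqrt (rho q k / 2 ^+ (eta k).-1) in
      let u := \sum_(d in supp k) acoef omega0 k d * sgnR (s d) * x d in
      [:: c * cos u; c * sin u]
    | s : {ffun 'I_D -> bool} <- signsS k].

Definition Phi_mask (omega0 : 'I_D -> R) (q : 'I_D -> nat -> R) (I : seq mindex)
    (x : 'I_D -> R) : seq R :=
  flatten [seq mask_block omega0 q k x | k <- I].

End ISFF.

(* Main.v *)
Require Import Defs.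
From mathcomp Require Import all_boot all_order all_algebra.
From mathcomp Require Import reals trigo.
Import Order.TTheory GRing.Theory Num.Theory.

Lemma cE (T : finType) (P : pred T) : count P (enum T) = #|P|.
Proof. by rewrite cardE -size_filter /enum_mem filter_predT. Qed.

Lemma cnt (T: finType) (A : {pred T}) :
  size [seq f : {ffun T -> bool} <- enum {ffun T -> bool} | [forall d, (d \in A) ==> f d]] = 2 ^ #|[predC A]|.
Proof.
rewrite size_filter.
have -> : count (fun f : {ffun T -> bool} => [forall d, (d \in A) ==> f d]) (enum {ffun T -> bool})
  = #|pffun_on true [predC A] (@predT bool)|.
  rewrite -cE; apply: eq_count => f /=.
  apply: eq_forallb => d; rewrite !inE; by case: (d \in A); case: (f d).
by rewrite card_pffun_on card_bool.
Qed.

Lemma size_flat_map (A B : Type) (f : A -> seq B) (s : seq A) :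
  size (flatten [seq f x | x <- s]) = (\sum_(x <- s) size (f x))%N.
Proof. elim: s => [|a s IH]; first by rewrite big_nil. by rewrite /= size_cat IH big_cons. Qed.

Lemma size_Xi D : (0 < D)%N -> size (Xi D) = 2 ^ D.-1.
Proof.
move=> hD.
have -> : size (Xi D) = 2 ^ #|[predC [pred d : 'I_D | val d == 0%N]]| by exact: (@cnt _ [pred d : 'I_D | val d == 0%N]).
congr (2 ^ _).
have h := cardC [pred d : 'I_D | val d == 0%N].
rewrite card_ord in h.
have h1 : #|[pred d : 'I_D | val d == 0%N]| = 1%N.
  rewrite -(card1 (Ordinal hD)); apply: eq_card => d; rewrite !inE. idtac.
  done.
move: h; rewrite h1; move: #|_| => n h; by rewrite -h.
Qed.

Lemma size_signsS D (k : mindex D) : supp k != set0 -> size (signsS k) = 2 ^ (eta k).-1.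
Proof.
move=> hne.
set A := [pred d : 'I_D | (d \notin supp k) || ((d \in supp k) &&
        [forall d' : 'I_D, (d' \in supp k) ==> (val d <= val d')%N])].
have -> : signsS k = [seq f : {ffun 'I_D -> bool} <- enum {ffun 'I_D -> bool} | [forall d, (d \in A) ==> f d]].
  rewrite /signsS; apply: eq_filter => f.
  apply/andP/forallP => [[/forallP H1 /forallP H2] d|H].
    apply/implyP; rewrite inE; case/orP => [hd|hd]; first exact: (implyP (H1 d)).
    exact: (implyP (H2 d)).
  split; apply/forallP => d; apply/implyP => hd; apply: (implyP (H d)); rewrite inE.
    by rewrite hd.
  by rewrite hd orbT.
rewrite cnt; congr (2 ^ _).
case/set0Pn: hne => i0 hi0.
case: (arg_minnP (fun d : 'I_D => val d) hi0) => d0 hd0 hmin.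
have -> : #|[predC A]| = #|[predD1 (supp k) & d0]|.
  apply: eq_card => d; have hk : (d \in supp k) = (k d != 0%N) by rewrite inE.
  rewrite !inE -hk.
  case hd: (d \in supp k) => /=; last by rewrite andbF.
  rewrite andbT.
  apply/negP/idP => [H|/eqP hne H].
    apply/eqP => E; apply: H; subst d; apply/forallP => d'; apply/implyP; exact: hmin.
  have := hmin d hd.
  have := implyP (forallP H d0) hd0.
  move=> h1 h2; apply: hne; apply: val_inj => /=; apply/eqP; rewrite eqn_leq h1 h2.
  done.
rewrite /eta (cardD1 d0 (supp k)) (_ : d0 \in supp k = true) //.
Qed.

Lemma size_block R D omega0 q k x :
  size (@mask_block R D omega0 q k x) = 2 ^ eta k.
Proof.
rewrite /mask_block; case: ifP => [/eqP h0|hne]; first by rewrite /eta h0 cards0.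
have hpos : (0 < eta k)%N by rewrite /eta card_gt0 hne.
rewrite -(prednK hpos) expnS -size_signsS ?hne //.
elim: (signsS k) => //= a s IH.
by rewrite IH mulnS.
Qed.

Theorem lemma2 (R : realType) (D : nat) (hD : (0 < D)%N)
  (omega0 : 'I_D -> R) (homega : forall d, (0 < omega0 d)%R)
  (q : 'I_D -> nat -> R) (hq : forall d n, (0 <= q d n)%R)
  (I : seq (mindex D)) (hI_uniq : uniq I) (hI_ne : I != [::])
  (x : 'I_D -> R) :
  let C := size I in
  [/\ (size I <= size (Phi_mask omega0 q I x))%N,
      size (Phi_mask omega0 q I x) = (\sum_(k <- I) 2 ^ eta k)%N,
      (\sum_(k <- I) 2 ^ eta k <= size (Phi_full omega0 q I x))%N
    & (size (Phi_full omega0 q I x) <= C * 2 ^ D)%N].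
Proof.
have hmask : size (Phi_mask omega0 q I x) = (\sum_(k <- I) 2 ^ eta k)%N.
  rewrite /Phi_mask size_flat_map; apply: eq_bigr => k _; exact: size_block.
have hfull : size (Phi_full omega0 q I x) = (size I * 2 ^ D)%N.
  rewrite /Phi_full size_flat_map.
  under eq_bigr => k _ do rewrite size_flat_map /= big_const_seq count_predT iter_addn_0.
  rewrite (size_Xi D hD) -expnS prednK // big_const_seq count_predT iter_addn_0.
  by rewrite mulnC.
have hle : forall k : mindex D, (eta k <= D)%N.
  by move=> k; rewrite /eta -[X in (_ <= X)%N](card_ord D) max_card.
split => //.
- rewrite hmask; elim: (I) => [|a s IH]; first by rewrite big_nil.
  by rewrite big_cons /= -add1n leq_add // expn_gt0.
- rewrite hfull; elim: (I) => [|a s IH]; first by rewrite big_nil.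
  by rewrite big_cons /= mulSn leq_add // leq_pexp2l.
- by rewrite hfull.
Qed.
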